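(* Let $(\mathcal C,\Delta,\delta,\beta,* )$ be a braided $*$-coalgebra and let $M,K:\mathcal C\otimes\mathcal C\to\mathbb C$ be linear (bilinear forms), with $M$ $\beta$-invariant. Then $\widetilde{M\star K}=\widetilde M\circledast\widetilde K$, where $M\star K=(M\otimes K)\circ\Lambda$ and $\circledast$ is the convolution of sesquilinear forms defined below.
   Context: Braided $*$-coalgebra: coassociative counital coalgebra $(\mathcal C,\Delta,\delta)$ with $\beta\in\mathrm{Aut}(\mathcal C\otimes\mathcal C)$ satisfying the braid equation $(\beta\otimes\mathrm{id})(\mathrm{id}\otimes\beta)(\beta\otimes\mathrm{id})=(\mathrm{id}\otimes\beta)(\beta\otimes\mathrm{id})(\mathrm{id}\otimes\beta)$, such that $(\Delta\otimes\mathrm{id})\beta=(\mathrm{id}\otimes\beta)(\beta\otimes\mathrm{id})(\mathrm{id}\otimes\Delta)$, $(\mathrm{id}\otimes\Delta)\beta=(\beta\otimes\mathrm{id})(\mathrm{id}\otimes\beta)(\Delta\otimes\mathrm{id})$, $(\delta\otimes\mathrm{id})\beta=\mathrm{id}\otimes\delta$, $(\mathrm{id}\otimes\delta)\beta=\delta\otimes\mathrm{id}$, together with an antilinear involution $*$ such that $\Delta\circ*=\beta\circ( *\otimes* )\circ\tau\circ\Delta$, $\delta(c^* )=\overline{\delta(c)}$, and $\beta\circ( *\otimes* )\circ\tau=( *\otimes* )\circ\tau\circ\beta^{-1}$, $\tau$ the flip. $\Lambda:=(\mathrm{id}\otimes\beta\otimes\mathrm{id})(\Delta\otimes\Delta)$.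 A functional $M$ on $\mathcal C\otimes\mathcal C$ is $\beta$-invariant if $(M\otimes\mathrm{id})\circ(\mathrm{id}\otimes\beta)\circ(\beta\otimes\mathrm{id})=\mathrm{id}\otimes M$ on $\mathcal C^{\otimes3}$. The conjugate space $\overline{\mathcal C}=\{\bar c:c\in\mathcal C\}$ has operations $\bar v+\lambda\bar w:=\overline{v+\bar\lambda w}$; write $\overline{a\otimes b}:=\bar a\otimes\bar b$ and define $\overline\Delta:\overline{\mathcal C}\to\overline{\mathcal C}\otimes\overline{\mathcal C}$ by $\overline\Delta(\bar c)=\overline{\Delta(c)}$. A sesquilinear form is a linear map $\overline{\mathcal C}\otimes\mathcal C\to\mathbb C$; for a bilinear form $K$ put $\widetilde K(\bar a\otimes b):=K(a^*\otimes b)$. For sesquilinear forms $P,Q$: $P\circledast Q:=(P\otimes Q)\circ(\mathrm{id}\otimes\tau\otimes\mathrm{id})\circ(\overline\Delta\otimes\Delta)$. *)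

(* Defs.v *)
(* Braided *-coalgebras, modelled over an arbitrary
   numClosedFieldType F (e.g. the complex numbers), with tensor products
   given abstractly by their universal property. *)
From HB Require Import structures.
From mathcomp Require Import all_boot all_algebra.
From Stdlib Require Import ClassicalEpsilon.
Set Implicit Arguments. Unset Strict Implicit. Unset Printing Implicit Defensive.
Import GRing.Theory Num.Theory.
Local Open Scope ring_scope.

Section Defs.
Variable F : numClosedFieldType.

Definition linmap (U X : lmodType F) (g : U -> X) : Prop :=
  forall (a : F) (x y : U), g (a *: x + y) = a *: g x + g y.

Definition bilin (U1 U2 X : lmodType F) (f : U1 -> U2 -> X) : Prop :=
  (forall b, linmap (fun a => f a b)) /\ (forall a, linmap (f a)).

Definition trilin (U1 U2 U3 X : lmodType F) (f : U1 -> U2 -> U3 -> X) : Prop :=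
  (forall b c, linmap (fun a => f a b c)) /\ (forall a c, linmap (fun b => f a b c))
  /\ (forall a b, linmap (f a b)).

Definition quadlin (U1 U2 U3 U4 X : lmodType F) (f : U1 -> U2 -> U3 -> U4 -> X) : Prop :=
  [/\ (forall b c d, linmap (fun a => f a b c d)), (forall a c d, linmap (fun b => f a b c d)),
      (forall a b d, linmap (fun c => f a b c d)) & (forall a b c, linmap (f a b c))].

Definition is_tensor2 (U1 U2 T : lmodType F) (t : U1 -> U2 -> T) : Prop :=
  [/\ bilin t,
      (forall w : T, exists s : seq (U1 * U2), w = \sum_(p <- s) t p.1 p.2) &
      (forall (X : lmodType F) (f : U1 -> U2 -> X), bilin f ->
         exists g : T -> X, linmap g /\ forall a b, g (t a b) = f a b)].

Definition is_tensor3 (U1 U2 U3 T : lmodType F) (t : U1 -> U2 -> U3 -> T) : Prop :=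
  [/\ trilin t,
      (forall w : T, exists s : seq (U1 * U2 * U3),
          w = \sum_(p <- s) t p.1.1 p.1.2 p.2) &
      (forall (X : lmodType F) (f : U1 -> U2 -> U3 -> X), trilin f ->
         exists g : T -> X, linmap g /\ forall a b c, g (t a b c) = f a b c)].

Definition is_tensor4 (U1 U2 U3 U4 T : lmodType F) (t : U1 -> U2 -> U3 -> U4 -> T) : Prop :=
  [/\ quadlin t,
      (forall w : T, exists s : seq (U1 * U2 * U3 * U4),
          w = \sum_(p <- s) t p.1.1.1 p.1.1.2 p.1.2 p.2) &
      (forall (X : lmodType F) (f : U1 -> U2 -> U3 -> U4 -> X), quadlin f ->
         exists g : T -> X, linmap g /\ forall a b c d, g (t a b c d) = f a b c d)].

(* The linear map on a tensor product determined by its values on pure tensors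
   (well defined whenever f is multilinear and (T,t) is a tensor product). *)
Definition ext2 (U1 U2 T X : lmodType F) (t : U1 -> U2 -> T) (f : U1 -> U2 -> X) : T -> X :=
  epsilon (inhabits (fun _ => 0))
    (fun g : T -> X => linmap g /\ forall a b, g (t a b) = f a b).

Definition ext3 (U1 U2 U3 T X : lmodType F) (t : U1 -> U2 -> U3 -> T)
  (f : U1 -> U2 -> U3 -> X) : T -> X :=
  epsilon (inhabits (fun _ => 0))
    (fun g : T -> X => linmap g /\ forall a b c, g (t a b c) = f a b c).

Definition ext4 (U1 U2 U3 U4 T X : lmodType F) (t : U1 -> U2 -> U3 -> U4 -> T)
  (f : U1 -> U2 -> U3 -> U4 -> X) : T -> X :=
  epsilon (inhabits (fun _ => 0))
    (fun g : T -> X => linmap g /\ forall a b c d, g (t a b c d) = f a b c d).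

Definition conjsp (V : lmodType F) : Type := V.
Section Conj.
Variable V : lmodType F.
HB.instance Definition _ := GRing.Zmodule.on (conjsp V).
Let cscale (a : F) (v : conjsp V) : conjsp V := (a^* *: (v : V)).
Fact cscaleA a b v : cscale a (cscale b v) = cscale (a * b) v.
Proof. by rewrite /cscale scalerA rmorphM mulrC. Qed.
Fact cscale1 : left_id 1 cscale.
Proof. by move=> v; rewrite /cscale rmorph1 scale1r. Qed.
Fact cscaleDr : right_distributive cscale +%R.
Proof. by move=> a u v; rewrite /cscale scalerDr. Qed.
Fact cscaleDl v : {morph cscale^~ v : a b / a + b}.
Proof. by move=> a b; rewrite /cscale rmorphD scalerDl. Qed.
HB.instance Definition _ :=
  GRing.Zmodule_isLmodule.Build F (conjsp V) cscaleA cscale1 cscaleDr cscaleDl.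
End Conj.


Section Coalg.
Variables (C C2 C3 : lmodType F).
Variables (t2 : C -> C -> C2) (t3 : C -> C -> C -> C3).
Variables (Delta : C -> C2) (delta : C -> F^o) (beta betainv : C2 -> C2).
Variable star : C -> C.

Definition DeltaId : C2 -> C3 :=
  ext2 t2 (fun a b => ext2 t2 (fun x y => t3 x y b) (Delta a)).
Definition IdDelta : C2 -> C3 :=
  ext2 t2 (fun a b => ext2 t2 (fun x y => t3 a x y) (Delta b)).
Definition betaId : C3 -> C3 :=
  ext3 t3 (fun a b c => ext2 t2 (fun x y => t3 x y c) (beta (t2 a b))).
Definition IdBeta : C3 -> C3 :=
  ext3 t3 (fun a b c => ext2 t2 (fun x y => t3 a x y) (beta (t2 b c))).
(* delta (x) id, id (x) delta : C (x) C -> C  (using F (x) C = C = C (x) F) *)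
Definition deltaId : C2 -> C := ext2 t2 (fun a b => delta a *: b).
Definition IdDelta0 : C2 -> C := ext2 t2 (fun a b => delta b *: a).
(* ( * (x) * ) o tau : C (x) C -> C (x) C, an antilinear map,
   i.e. a linear map C (x) C -> conj(C (x) C) *)
Definition starFlip : C2 -> conjsp C2 :=
  ext2 t2 (fun a b => (t2 (star b) (star a) : conjsp C2)).

Definition braided_star_coalgebra : Prop :=
  [/\ [/\ linmap Delta, linmap delta, linmap beta,
          cancel beta betainv & cancel betainv beta],
      (forall c, DeltaId (Delta c) = IdDelta (Delta c)),
      (forall c, deltaId (Delta c) = c /\ IdDelta0 (Delta c) = c),
      (forall w, betaId (IdBeta (betaId w)) = IdBeta (betaId (IdBeta w))) /\
      [/\ (forall w, DeltaId (beta w) = IdBeta (betaId (IdDelta w))),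
          (forall w, IdDelta (beta w) = betaId (IdBeta (DeltaId w))),
          (forall w, deltaId (beta w) = IdDelta0 w) &
          (forall w, IdDelta0 (beta w) = deltaId w)] &
      [/\ (forall (a : F) x y, star (a *: x + y) = a^* *: star x + star y),
          (forall x, star (star x) = x),
          (forall c, Delta (star c) = beta (starFlip (Delta c))),
          (forall c, delta (star c) = (delta c)^*) &
          (forall w, beta (starFlip w) = starFlip (betainv w))]].

Definition MId (M : C2 -> F^o) : C3 -> C := ext3 t3 (fun a b c => M (t2 a b) *: c).
Definition IdM (M : C2 -> F^o) : C3 -> C := ext3 t3 (fun a b c => M (t2 b c) *: a).
Definition beta_invariant (M : C2 -> F^o) : Prop :=
  forall w, MId M (IdBeta (betaId w)) = IdM M w.

Variables (C4 : lmodType F) (t4 : C -> C -> C -> C -> C4).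
Definition DeltaDelta : C2 -> C4 :=
  ext2 t2 (fun a b => ext2 t2 (fun x y => ext2 t2 (fun u v => t4 x y u v) (Delta b))
                             (Delta a)).
Definition IdBetaId : C4 -> C4 :=
  ext4 t4 (fun a b c d => ext2 t2 (fun x y => t4 a x y d) (beta (t2 b c))).
Definition Lambda (w : C2) : C4 := IdBetaId (DeltaDelta w).
Definition tensorFun (M K : C2 -> F^o) : C4 -> F^o :=
  ext4 t4 (fun a b c d => (M (t2 a b) * K (t2 c d) : F^o)).
Definition starprod (M K : C2 -> F^o) (w : C2) : F^o := tensorFun M K (Lambda w).

(* sesquilinear forms: linear maps conj(C) (x) C -> F *)
Variables (CbC : lmodType F) (s2 : conjsp C -> C -> CbC).
Definition tildeF (K : C2 -> F^o) : CbC -> F^o :=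
  ext2 s2 (fun (a : conjsp C) (b : C) => K (t2 (star a) b)).

Variables (CbCb : lmodType F) (b2 : conjsp C -> conjsp C -> CbCb).
Variables (Mx1 : lmodType F) (m1 : conjsp C -> conjsp C -> C -> C -> Mx1).
Variables (Mx2 : lmodType F) (m2 : conjsp C -> C -> conjsp C -> C -> Mx2).
Definition bar2 : C2 -> conjsp CbCb :=
  ext2 t2 (fun a b => (b2 a b : conjsp CbCb)).
Definition DeltaBar (c : conjsp C) : CbCb := bar2 (Delta c).
Definition DeltaBarDelta : CbC -> Mx1 :=
  ext2 s2 (fun a b => ext2 b2 (fun x y => ext2 t2 (fun u v => m1 x y u v) (Delta b))
                             (DeltaBar a)).
Definition IdTauId : Mx1 -> Mx2 := ext4 m1 (fun x y u v => m2 x u y v).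
Definition sesqTensor (P Q : CbC -> F^o) : Mx2 -> F^o :=
  ext4 m2 (fun x u y v => (P (s2 x u) * Q (s2 y v) : F^o)).
Definition conv (P Q : CbC -> F^o) (w : CbC) : F^o :=
  sesqTensor P Q (IdTauId (DeltaBarDelta w)).

End Coalg.
End Defs.

(* Main.v *)
Require Import Defs.
From HB Require Import structures.
From mathcomp Require Import all_boot all_algebra.
From Stdlib Require Import ClassicalEpsilon.
Set Implicit Arguments. Unset Strict Implicit. Unset Printing Implicit Defensive.
Import GRing.Theory Num.Theory.
Local Open Scope ring_scope.

Section Infra.
Variable F : numClosedFieldType.

Lemma linD (U X : lmodType F) (g : U -> X) : linmap g -> forall x y, g (x + y) = g x + g y.
Proof. by move=> h x y; have := h 1 x y; rewrite !scale1r. Qed.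

Lemma lin0 (U X : lmodType F) (g : U -> X) : linmap g -> g 0 = 0.
Proof.
move=> h; have E := linD h 0 0; rewrite addr0 in E.
by apply: (addrI (g 0)); rewrite addr0 -E.
Qed.

Lemma linZ (U X : lmodType F) (g : U -> X) : linmap g -> forall a x, g (a *: x) = a *: g x.
Proof. by move=> h a x; have := h a x 0; rewrite (lin0 h) !addr0. Qed.

Lemma linsum (U X : lmodType F) (g : U -> X) (I : Type) (s : seq I) (f : I -> U) :
  linmap g -> g (\sum_(i <- s) f i) = \sum_(i <- s) g (f i).
Proof. by move=> h; apply: big_morph; [exact: linD | exact: lin0]. Qed.

Lemma lin_comp (U V X : lmodType F) (g : V -> X) (h : U -> V) :
  linmap g -> linmap h -> linmap (fun x => g (h x)).
Proof. by move=> hg hh a x y; rewrite hh hg. Qed.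

Lemma lin_add (U X : lmodType F) (g1 g2 : U -> X) :
  linmap g1 -> linmap g2 -> linmap (fun x => g1 x + g2 x).
Proof. by move=> h1 h2 a x y; rewrite h1 h2 scalerDr addrACA. Qed.

Lemma lin_scale (U X : lmodType F) (c : F) (g : U -> X) :
  linmap g -> linmap (fun x => c *: g x).
Proof. by move=> hg a x y; rewrite hg scalerDr !scalerA [c * a]mulrC. Qed.

Lemma lin_sum (U X : lmodType F) (I : Type) (s : seq I) (G : I -> U -> X) :
  (forall i, linmap (G i)) -> linmap (fun x => \sum_(i <- s) G i x).
Proof.
move=> hG; elim: s => [|i s IH] a x y; first by rewrite !big_nil scaler0 addr0.
by rewrite !big_cons hG IH scalerDr addrACA.
Qed.

Lemma lin_id (U : lmodType F) : linmap (fun x : U => x).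
Proof. by []. Qed.

Lemma lin_conj2 (U X : lmodType F) (g : U -> X) :
  linmap g -> linmap (fun x : conjsp U => (g x : conjsp X)).
Proof. by move=> h a x y; exact: h. Qed.

Lemma lin_conjL (U X : lmodType F) (g : U -> conjsp X) :
  linmap g -> linmap (fun x : conjsp U => (g x : X)).
Proof.
move=> h a x y; have := h a^* x y.
by rewrite /GRing.scale /= => ->; rewrite /= conjCK.
Qed.

Lemma lin_conjR (U X : lmodType F) (g : conjsp U -> X) :
  linmap g -> linmap (fun x : U => (g x : conjsp X)).
Proof.
move=> h a x y; have := h a^* x y.
rewrite /GRing.scale /= conjCK => ->; done.
Qed.

Section T2.
Variables (U1 U2 T : lmodType F) (t : U1 -> U2 -> T) (hT : is_tensor2 t).

Lemma ext2P (X : lmodType F) (f : U1 -> U2 -> X) : bilin f ->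
  linmap (ext2 t f) /\ forall a b, ext2 t f (t a b) = f a b.
Proof. by case: hT => _ _ H hf; rewrite /ext2; exact: (epsilon_spec _ _ (H _ _ hf)). Qed.

Lemma ext2_lin (X : lmodType F) (f : U1 -> U2 -> X) : bilin f -> linmap (ext2 t f).
Proof. by move=> hf; case: (ext2P hf). Qed.

Lemma ext2_t (X : lmodType F) (f : U1 -> U2 -> X) : bilin f ->
  forall a b, ext2 t f (t a b) = f a b.
Proof. by move=> hf; case: (ext2P hf). Qed.

Lemma t2_uniq (X : lmodType F) (g1 g2 : T -> X) : linmap g1 -> linmap g2 ->
  (forall a b, g1 (t a b) = g2 (t a b)) -> forall w, g1 w = g2 w.
Proof.
case: hT => _ S _ h1 h2 E w; have [s ->] := S w.
by rewrite (linsum _ _ h1) (linsum _ _ h2); apply: eq_bigr.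
Qed.

Lemma ext2E (X : lmodType F) (f : U1 -> U2 -> X) (g : T -> X) : bilin f -> linmap g ->
  (forall a b, g (t a b) = f a b) -> forall w, ext2 t f w = g w.
Proof.
move=> hf hg E; apply: t2_uniq => //; first exact: ext2_lin.
by move=> a b; rewrite ext2_t.
Qed.

Lemma ext2_param (P X : lmodType F) (Phi : P -> U1 -> U2 -> X) :
  (forall p, bilin (Phi p)) -> (forall a b, linmap (fun p => Phi p a b)) ->
  forall w, linmap (fun p => ext2 t (Phi p) w).
Proof.
move=> hb hl w al p q.
rewrite (@ext2E _ _ (fun w => al *: ext2 t (Phi p) w + ext2 t (Phi q) w)) //.
- by apply: lin_add; [apply: lin_scale|]; apply: ext2_lin.
- by move=> a b; rewrite !ext2_t // hl.
Qed.
End T2.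

Lemma ext3P (U1 U2 U3 T X : lmodType F) (t : U1 -> U2 -> U3 -> T) (f : U1 -> U2 -> U3 -> X) :
  is_tensor3 t -> trilin f ->
  linmap (ext3 t f) /\ forall a b c, ext3 t f (t a b c) = f a b c.
Proof. by case=> _ _ H hf; rewrite /ext3; exact: (epsilon_spec _ _ (H _ _ hf)). Qed.

Lemma ext4P (U1 U2 U3 U4 T X : lmodType F) (t : U1 -> U2 -> U3 -> U4 -> T)
  (f : U1 -> U2 -> U3 -> U4 -> X) :
  is_tensor4 t -> quadlin f ->
  linmap (ext4 t f) /\ forall a b c d, ext4 t f (t a b c d) = f a b c d.
Proof. by case=> _ _ H hf; rewrite /ext4; exact: (epsilon_spec _ _ (H _ _ hf)). Qed.

End Infra.
Section Main.
Variables (F : numClosedFieldType) (C : lmodType F)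
  (C2 : lmodType F) (t2 : C -> C -> C2) (C3 : lmodType F) (t3 : C -> C -> C -> C3)
  (C4 : lmodType F) (t4 : C -> C -> C -> C -> C4)
  (CbC : lmodType F) (s2 : conjsp C -> C -> CbC)
  (CbCb : lmodType F) (b2 : conjsp C -> conjsp C -> CbCb)
  (Mx1 : lmodType F) (m1 : conjsp C -> conjsp C -> C -> C -> Mx1)
  (Mx2 : lmodType F) (m2 : conjsp C -> C -> conjsp C -> C -> Mx2).
Hypotheses (hC2 : is_tensor2 t2) (hC3 : is_tensor3 t3) (hC4 : is_tensor4 t4)
  (hCbC : is_tensor2 s2) (hCbCb : is_tensor2 b2)
  (hMx1 : is_tensor4 m1) (hMx2 : is_tensor4 m2).
Variables (Delta : C -> C2) (delta : C -> F^o) (beta betainv : C2 -> C2) (star : C -> C).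
Hypothesis (hC : braided_star_coalgebra t2 t3 Delta delta beta betainv star).
Variables (M K : C2 -> F^o).
Hypotheses (hM : linmap M) (hK : linmap K) (hMinv : beta_invariant t2 t3 beta M).

Lemma hDl : linmap Delta. Proof. by case: hC => [[]]. Qed.
Lemma hbl : linmap beta. Proof. by case: hC => [[]]. Qed.
Lemma hst : forall (a : F) x y, star (a *: x + y) = a^* *: star x + star y.
Proof. by case: hC => _ _ _ _ []. Qed.
Lemma hDst : forall c, Delta (star c) = beta (starFlip t2 star (Delta c)).
Proof. by case: hC => _ _ _ _ []. Qed.

Lemma t2l b : linmap (fun a => t2 a b). Proof. by case: hC2 => [[]]. Qed.
Lemma t2r a : linmap (t2 a). Proof. by case: hC2 => [[]]. Qed.
Lemma t31 b c : linmap (fun a => t3 a b c). Proof. by case: hC3 => [[]]. Qed.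
Lemma t32 a c : linmap (fun b => t3 a b c). Proof. by case: hC3 => [[? []]]. Qed.
Lemma t33 a b : linmap (t3 a b). Proof. by case: hC3 => [[? []]]. Qed.
Lemma t41 b c d : linmap (fun a => t4 a b c d). Proof. by case: hC4 => [[]]. Qed.
Lemma t42 a c d : linmap (fun b => t4 a b c d). Proof. by case: hC4 => [[]]. Qed.
Lemma t43 a b d : linmap (fun c => t4 a b c d). Proof. by case: hC4 => [[]]. Qed.
Lemma t44 a b c : linmap (t4 a b c). Proof. by case: hC4 => [[]]. Qed.
Lemma s2l b : linmap (fun a => s2 a b). Proof. by case: hCbC => [[]]. Qed.
Lemma s2r a : linmap (s2 a). Proof. by case: hCbC => [[]]. Qed.
Lemma b2l b : linmap (fun a => b2 a b). Proof. by case: hCbCb => [[]]. Qed.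
Lemma b2r a : linmap (b2 a). Proof. by case: hCbCb => [[]]. Qed.
Lemma m11 b c d : linmap (fun a => m1 a b c d). Proof. by case: hMx1 => [[]]. Qed.
Lemma m12 a c d : linmap (fun b => m1 a b c d). Proof. by case: hMx1 => [[]]. Qed.
Lemma m13 a b d : linmap (fun c => m1 a b c d). Proof. by case: hMx1 => [[]]. Qed.
Lemma m14 a b c : linmap (m1 a b c). Proof. by case: hMx1 => [[]]. Qed.
Lemma m21 b c d : linmap (fun a => m2 a b c d). Proof. by case: hMx2 => [[]]. Qed.
Lemma m22 a c d : linmap (fun b => m2 a b c d). Proof. by case: hMx2 => [[]]. Qed.
Lemma m23 a b d : linmap (fun c => m2 a b c d). Proof. by case: hMx2 => [[]]. Qed.
Lemma m24 a b c : linmap (m2 a b c). Proof. by case: hMx2 => [[]]. Qed.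

Lemma star_lin : linmap (fun x : conjsp C => star x).
Proof. move=> a x y; rewrite /GRing.scale /=. by rewrite hst conjCK. Qed.

Lemma lin_mulr (U : lmodType F) (g : U -> F^o) (k : F) :
  linmap g -> linmap (fun x => (g x * k : F^o)).
Proof. by move=> h a x y; rewrite h mulrDl scalerAl. Qed.

Lemma lin_scalel (U X : lmodType F) (g : U -> F^o) (c : X) :
  linmap g -> linmap (fun x => g x *: c).
Proof. by move=> h a x y; rewrite h scalerDl scalerA. Qed.

Lemma tilde_bilin (G : C2 -> F^o) : linmap G ->
  bilin (fun (a : conjsp C) (b : C) => G (t2 (star a) b)).
Proof.
move=> hG; split=> [b|a].
  exact: (lin_comp hG (lin_comp (t2l b) star_lin)).
exact: (lin_comp hG (t2r _)).
Qed.

Definition Gxy x y := ext2 t2 (fun u v => t4 x y u v).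
Lemma Gxy_bilin x y : bilin (fun u v => t4 x y u v).
Proof. by split=> [v|u]; [exact: t43|exact: t44]. Qed.
Lemma Gxy_lin x y : linmap (Gxy x y). Proof. exact: (ext2_lin hC2 (Gxy_bilin x y)). Qed.

Definition PhiD b x y := Gxy x y (Delta b).
Lemma PhiD_bilin b : bilin (PhiD b).
Proof.
split=> [y|x].
  apply: (ext2_param hC2 (Phi := fun x u v => t4 x y u v)) => [x|u v]; first exact: Gxy_bilin.
  exact: t41.
apply: (ext2_param hC2 (Phi := fun y u v => t4 x y u v)) => [y|u v]; first exact: Gxy_bilin.
exact: t42.
Qed.

Lemma DD_bilin : bilin (fun a b => ext2 t2 (PhiD b) (Delta a)).
Proof.
split=> [b|a].
  exact: (lin_comp (ext2_lin hC2 (PhiD_bilin b)) hDl).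
apply: (ext2_param hC2 (Phi := PhiD)) => [b|x y]; first exact: PhiD_bilin.
exact: (lin_comp (Gxy_lin x y) hDl).
Qed.

Lemma DD_lin : linmap (DeltaDelta t2 Delta t4).
Proof. exact: (ext2_lin hC2 DD_bilin). Qed.

Lemma DD_t c b : DeltaDelta t2 Delta t4 (t2 c b) = ext2 t2 (PhiD b) (Delta c).
Proof. exact: (ext2_t hC2 DD_bilin). Qed.

Lemma mid_bilin a d : bilin (fun x y => t4 a x y d).
Proof. by split=> [y|x]; [exact: t42|exact: t43]. Qed.
Lemma IBI_quad : quadlin (fun a b c d => ext2 t2 (fun x y => t4 a x y d) (beta (t2 b c))).
Proof.
split=> [b c d|a c d|a b d|a b c].
- apply: (ext2_param hC2 (Phi := fun a x y => t4 a x y d)) => [a|x y]; last exact: t41.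
  by split=> [y|x]; [exact: t42|exact: t43].
- exact: (lin_comp (ext2_lin hC2 (mid_bilin _ _)) (lin_comp hbl (t2l c))).
- exact: (lin_comp (ext2_lin hC2 (mid_bilin _ _)) (lin_comp hbl (t2r b))).
- apply: (ext2_param hC2 (Phi := fun d x y => t4 a x y d)) => [d|x y]; last exact: t44.
  by split=> [y|x]; [exact: t42|exact: t43].
Qed.

Lemma IBI_lin : linmap (IdBetaId t2 beta t4). Proof. by case: (ext4P hC4 IBI_quad). Qed.
Lemma IBI_t a b c d : IdBetaId t2 beta t4 (t4 a b c d) =
  ext2 t2 (fun x y => t4 a x y d) (beta (t2 b c)).
Proof. by case: (ext4P hC4 IBI_quad) => _ H; exact: H. Qed.

Lemma TF_quad : quadlin (fun a b c d => (M (t2 a b) * K (t2 c d) : F^o)).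
Proof.
split=> [b c d|a c d|a b d|a b c].
- exact: (lin_mulr _ (lin_comp hM (t2l b))).
- exact: (lin_mulr _ (lin_comp hM (t2r a))).
- move=> al x y; rewrite [in LHS](lin_comp hK (t2l d)) mulrDr.
  by rewrite /GRing.scale /= mulrCA.
- move=> al x y; rewrite [in LHS](lin_comp hK (t2r c)) mulrDr.
  by rewrite /GRing.scale /= mulrCA.
Qed.
Lemma TF_lin : linmap (tensorFun t2 t4 M K). Proof. by case: (ext4P hC4 TF_quad). Qed.
Lemma TF_t a b c d : tensorFun t2 t4 M K (t4 a b c d) = M (t2 a b) * K (t2 c d).
Proof. by case: (ext4P hC4 TF_quad) => _ H; exact: H. Qed.

Lemma SP_lin : linmap (starprod t2 Delta beta t4 M K).
Proof. exact: (lin_comp TF_lin (lin_comp IBI_lin DD_lin)). Qed.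

Lemma MId_tri : trilin (fun a b c => (M (t2 a b) *: c : C)).
Proof.
split; [|split].
- move=> b c; exact: (lin_scalel _ (lin_comp hM (t2l b))).
- move=> a c; exact: (lin_scalel _ (lin_comp hM (t2r a))).
- move=> a b; exact: lin_scale.
Qed.
Lemma MId_lin : linmap (MId t2 t3 M). Proof. by case: (ext3P hC3 MId_tri). Qed.
Lemma MId_t a b c : MId t2 t3 M (t3 a b c) = M (t2 a b) *: c.
Proof. by case: (ext3P hC3 MId_tri) => _ H; exact: H. Qed.

Lemma IdM_tri : trilin (fun a b c => (M (t2 b c) *: a : C)).
Proof.
split; [|split].
- move=> b c; exact: lin_scale.
- move=> a c; exact: (lin_scalel _ (lin_comp hM (t2l c))).
- move=> a b; exact: (lin_scalel _ (lin_comp hM (t2r b))).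
Qed.
Lemma IdM_t a b c : IdM t2 t3 M (t3 a b c) = M (t2 b c) *: a.
Proof. by case: (ext3P hC3 IdM_tri) => _ H; exact: H. Qed.

Lemma t3l_bilin c : bilin (fun x y => t3 x y c).
Proof. by split=> [y|x]; [exact: t31|exact: t32]. Qed.
Lemma t3r_bilin a : bilin (fun x y => t3 a x y).
Proof. by split=> [y|x]; [exact: t32|exact: t33]. Qed.

Lemma bId_tri : trilin (fun a b c => ext2 t2 (fun x y => t3 x y c) (beta (t2 a b))).
Proof.
split; [|split].
- move=> b c; exact: (lin_comp (ext2_lin hC2 (t3l_bilin _)) (lin_comp hbl (t2l b))).
- move=> a c; exact: (lin_comp (ext2_lin hC2 (t3l_bilin _)) (lin_comp hbl (t2r a))).
- move=> a b; apply: (ext2_param hC2 (Phi := fun c x y => t3 x y c)) => [c|x y].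
    exact: t3l_bilin.
  exact: t33.
Qed.
Lemma bId_t a b c : betaId t2 t3 beta (t3 a b c) = ext2 t2 (fun x y => t3 x y c) (beta (t2 a b)).
Proof. by case: (ext3P hC3 bId_tri) => _ H; exact: H. Qed.

Lemma Idb_tri : trilin (fun a b c => ext2 t2 (fun x y => t3 a x y) (beta (t2 b c))).
Proof.
split; [|split].
- move=> b c; apply: (ext2_param hC2 (Phi := fun a x y => t3 a x y)) => [a|x y].
    exact: t3r_bilin.
  exact: t31.
- move=> a c; exact: (lin_comp (ext2_lin hC2 (t3r_bilin _)) (lin_comp hbl (t2l c))).
- move=> a b; exact: (lin_comp (ext2_lin hC2 (t3r_bilin _)) (lin_comp hbl (t2r b))).
Qed.
Lemma Idb_lin : linmap (IdBeta t2 t3 beta). Proof. by case: (ext3P hC3 Idb_tri). Qed.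
Lemma Idb_t a b c : IdBeta t2 t3 beta (t3 a b c) = ext2 t2 (fun x y => t3 a x y) (beta (t2 b c)).
Proof. by case: (ext3P hC3 Idb_tri) => _ H; exact: H. Qed.

Definition J u v := ext2 t2 (fun x y => t4 x y u v).
Lemma J_bilin u v : bilin (fun x y => t4 x y u v).
Proof. by split=> [y|x]; [exact: t41|exact: t42]. Qed.
Lemma J_lin u v : linmap (J u v). Proof. exact: (ext2_lin hC2 (J_bilin u v)). Qed.
Definition L u := ext2 t2 (fun x y => t3 x y u).
Definition N v W := K (t2 (MId t2 t3 M W) v).
Lemma N_lin v : linmap (N v).
Proof. exact: (lin_comp hK (lin_comp (t2l v) MId_lin)). Qed.

Lemma key2 p v W : tensorFun t2 t4 M K (ext2 t2 (fun x y => t4 p x y v) W) =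
  N v (ext2 t2 (fun x y => t3 p x y) W).
Proof.
move: W; apply: (t2_uniq hC2).
- exact: (lin_comp TF_lin (ext2_lin hC2 (mid_bilin _ _))).
- exact: (lin_comp (N_lin v) (ext2_lin hC2 (t3r_bilin _))).
move=> x y; rewrite (ext2_t hC2 (mid_bilin _ _)) (ext2_t hC2 (t3r_bilin _)).
by rewrite TF_t /N MId_t (linZ (t2l v)) (linZ hK).
Qed.

Lemma key1 u v W : tensorFun t2 t4 M K (IdBetaId t2 beta t4 (J u v W)) =
  N v (IdBeta t2 t3 beta (L u W)).
Proof.
move: W; apply: (t2_uniq hC2).
- exact: (lin_comp TF_lin (lin_comp IBI_lin (J_lin u v))).
- exact: (lin_comp (N_lin v) (lin_comp Idb_lin (ext2_lin hC2 (t3l_bilin _)))).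
move=> p q; rewrite /J /L (ext2_t hC2 (J_bilin _ _)) (ext2_t hC2 (t3l_bilin _)).
by rewrite IBI_t Idb_t key2.
Qed.

Lemma psi_beta u v x y : tensorFun t2 t4 M K (IdBetaId t2 beta t4 (J u v (beta (t2 x y)))) =
  M (t2 y u) * K (t2 x v).
Proof.
rewrite key1 /L -bId_t /N hMinv IdM_t.
by rewrite (linZ (t2l v)) (linZ hK).
Qed.

Lemma conj_sum (V : lmodType F) (I : Type) (s : seq I) (f : I -> V) :
  ((\sum_(i <- s) (f i : conjsp V) : conjsp V) : V) = \sum_(i <- s) f i.
Proof. by []. Qed.

Lemma SF_bilin : bilin (fun a b => (t2 (star b) (star a) : conjsp C2)).
Proof.
split=> [b|a].
  exact: (lin_conjR (g := fun a : conjsp C => t2 (star b) (star a)) (lin_comp (t2r _) star_lin)).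
exact: (lin_conjR (g := fun b : conjsp C => t2 (star b) (star a)) (lin_comp (t2l _) star_lin)).
Qed.
Lemma SF_lin : linmap (starFlip t2 star). Proof. exact: (ext2_lin hC2 SF_bilin). Qed.
Lemma SF_t a b : starFlip t2 star (t2 a b) = t2 (star b) (star a).
Proof. exact: (ext2_t hC2 SF_bilin). Qed.

Lemma bar2_bilin : bilin (fun a b : C => (b2 a b : conjsp CbCb)).
Proof.
split=> [b|a].
  exact: (lin_conjR (g := fun a : conjsp C => b2 a b) (b2l b)).
exact: (lin_conjR (g := fun b : conjsp C => b2 a b) (b2r a)).
Qed.
Lemma bar2_lin : linmap (bar2 t2 b2). Proof. exact: (ext2_lin hC2 bar2_bilin). Qed.
Lemma bar2_t a b : bar2 t2 b2 (t2 a b) = b2 a b.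
Proof. exact: (ext2_t hC2 bar2_bilin). Qed.

Lemma DB_lin : linmap (fun c : conjsp C => DeltaBar t2 Delta b2 c).
Proof.
exact: (lin_conjL (g := fun c : C => bar2 t2 b2 (Delta c)) (lin_comp bar2_lin hDl)).
Qed.

Lemma m1_bilin x y : bilin (fun u v => m1 x y u v).
Proof. by split=> [v|u]; [exact: m13|exact: m14]. Qed.
Definition Hb b x y := ext2 t2 (fun u v => m1 x y u v) (Delta b).
Lemma Hb_bilin b : bilin (Hb b).
Proof.
split=> [y|x].
  apply: (ext2_param hC2 (Phi := fun x u v => m1 x y u v)) => [x|u v]; first exact: m1_bilin.
  exact: m11.
apply: (ext2_param hC2 (Phi := fun y u v => m1 x y u v)) => [y|u v]; first exact: m1_bilin.
exact: m12.
Qed.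
Lemma DBD_bilin : bilin (fun a b => ext2 b2 (Hb b) (DeltaBar t2 Delta b2 a)).
Proof.
split=> [b|a].
  exact: (lin_comp (ext2_lin hCbCb (Hb_bilin b)) DB_lin).
apply: (ext2_param hCbCb (Phi := Hb)) => [b|x y]; first exact: Hb_bilin.
exact: (lin_comp (ext2_lin hC2 (m1_bilin x y)) hDl).
Qed.
Lemma DBD_lin : linmap (DeltaBarDelta t2 Delta s2 b2 m1).
Proof. exact: (ext2_lin hCbC DBD_bilin). Qed.
Lemma DBD_t a b : DeltaBarDelta t2 Delta s2 b2 m1 (s2 a b) = ext2 b2 (Hb b) (DeltaBar t2 Delta b2 a).
Proof. exact: (ext2_t hCbC DBD_bilin). Qed.

Lemma ITI_quad : quadlin (fun x y u v => m2 x u y v).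
Proof. by split=> [y u v|x u v|x y v|x y u]; [exact: m21|exact: m23|exact: m22|exact: m24]. Qed.
Lemma ITI_lin : linmap (IdTauId m1 m2). Proof. by case: (ext4P hMx1 ITI_quad). Qed.
Lemma ITI_t x y u v : IdTauId m1 m2 (m1 x y u v) = m2 x u y v.
Proof. by case: (ext4P hMx1 ITI_quad) => _ H; exact: H. Qed.

Section ST.
Variables (P Q : CbC -> F^o) (hP : linmap P) (hQ : linmap Q).
Lemma ST_quad : quadlin (fun x u y v => (P (s2 x u) * Q (s2 y v) : F^o)).
Proof.
split=> [b c d|a c d|a b d|a b c].
- exact: (lin_mulr _ (lin_comp hP (s2l b))).
- exact: (lin_mulr _ (lin_comp hP (s2r a))).
- move=> al x y; rewrite [in LHS](lin_comp hQ (s2l d)) mulrDr.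
  by rewrite /GRing.scale /= mulrCA.
- move=> al x y; rewrite [in LHS](lin_comp hQ (s2r c)) mulrDr.
  by rewrite /GRing.scale /= mulrCA.
Qed.
Lemma ST_lin : linmap (sesqTensor s2 m2 P Q). Proof. by case: (ext4P hMx2 ST_quad). Qed.
Lemma ST_t x u y v : sesqTensor s2 m2 P Q (m2 x u y v) = P (s2 x u) * Q (s2 y v).
Proof. by case: (ext4P hMx2 ST_quad) => _ H; exact: H. Qed.
End ST.

Lemma tF_lin G : linmap G -> linmap (tildeF t2 star s2 G).
Proof. by move=> hG; exact: (ext2_lin hCbC (tilde_bilin hG)). Qed.
Lemma tF_t G : linmap G -> forall a b, tildeF t2 star s2 G (s2 a b) = G (t2 (star a) b).
Proof. by move=> hG; exact: (ext2_t hCbC (tilde_bilin hG)). Qed.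

Lemma spanC2 W : exists s : seq (C * C), W = \sum_(p <- s) t2 p.1 p.2.
Proof. by case: hC2 => _ S _; exact: S. Qed.

Lemma main_sec w :
    tildeF t2 star s2 (starprod t2 Delta beta t4 M K) w =
    conv t2 Delta s2 b2 m1 m2 (tildeF t2 star s2 M) (tildeF t2 star s2 K) w.
Proof.
move: w; apply: (t2_uniq hCbC).
- exact: (tF_lin SP_lin).
- exact: (lin_comp (ST_lin (tF_lin hM) (tF_lin hK)) (lin_comp ITI_lin DBD_lin)).
move=> a b; rewrite (tF_t SP_lin).
have [sa Ha] := spanC2 (Delta a).
have [sb Hb'] := spanC2 (Delta b).
transitivity (\sum_(r <- sb) \sum_(p <- sa) M (t2 (star p.1) r.1) * K (t2 (star p.2) r.2)).
  have E1 W : ext2 t2 (PhiD b) W = \sum_(r <- sb) J r.1 r.2 W.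
    rewrite (ext2E hC2 (g := fun W => \sum_(r <- sb) J r.1 r.2 W) (PhiD_bilin b)) //.
      by apply: lin_sum => r; exact: J_lin.
    move=> x y; rewrite /PhiD /Gxy Hb' (linsum _ _ (ext2_lin hC2 (Gxy_bilin _ _))).
    by apply: eq_bigr => r _; rewrite /J (ext2_t hC2 (Gxy_bilin _ _)) (ext2_t hC2 (J_bilin _ _)).
  rewrite /starprod /Lambda DD_t E1 (linsum _ _ IBI_lin) (linsum _ _ TF_lin).
  apply: eq_bigr => r _.
  rewrite hDst Ha (linsum _ _ SF_lin) conj_sum (linsum _ _ hbl) (linsum _ _ (J_lin _ _)).
  rewrite (linsum _ _ IBI_lin) (linsum _ _ TF_lin).
  by apply: eq_bigr => p _; rewrite SF_t psi_beta.
rewrite exchange_big /conv DBD_t /DeltaBar Ha (linsum _ _ bar2_lin) conj_sum.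
rewrite (linsum _ _ (ext2_lin hCbCb (Hb_bilin b))) (linsum _ _ ITI_lin).
rewrite (linsum _ _ (ST_lin (tF_lin hM) (tF_lin hK))).
apply: eq_bigr => p _.
rewrite bar2_t (ext2_t hCbCb (Hb_bilin b)) /Hb Hb' (linsum _ _ (ext2_lin hC2 (m1_bilin _ _))).
rewrite (linsum _ _ ITI_lin) (linsum _ _ (ST_lin (tF_lin hM) (tF_lin hK))).
apply: eq_bigr => r _.
rewrite (ext2_t hC2 (m1_bilin _ _)) ITI_t (ST_t (tF_lin hM) (tF_lin hK)).
by rewrite (tF_t hM) (tF_t hK).
Qed.
End Main.

Theorem mainTheorem9 (F : numClosedFieldType) (C : lmodType F)
  (* the tensor powers C^{(x)2}, C^{(x)3}, C^{(x)4} *)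
  (C2 : lmodType F) (t2 : C -> C -> C2) (C3 : lmodType F) (t3 : C -> C -> C -> C3)
  (C4 : lmodType F) (t4 : C -> C -> C -> C -> C4)
  (* conj(C) (x) C,  conj(C) (x) conj(C),  conj(C)^{(x)2} (x) C^{(x)2},
     and conj(C) (x) C (x) conj(C) (x) C *)
  (CbC : lmodType F) (s2 : conjsp C -> C -> CbC)
  (CbCb : lmodType F) (b2 : conjsp C -> conjsp C -> CbCb)
  (Mx1 : lmodType F) (m1 : conjsp C -> conjsp C -> C -> C -> Mx1)
  (Mx2 : lmodType F) (m2 : conjsp C -> C -> conjsp C -> C -> Mx2)
  (hC2 : is_tensor2 t2) (hC3 : is_tensor3 t3) (hC4 : is_tensor4 t4)
  (hCbC : is_tensor2 s2) (hCbCb : is_tensor2 b2)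
  (hMx1 : is_tensor4 m1) (hMx2 : is_tensor4 m2)
  (* the braided *-coalgebra (C, Delta, delta, beta, star) *)
  (Delta : C -> C2) (delta : C -> F^o) (beta betainv : C2 -> C2) (star : C -> C)
  (hC : braided_star_coalgebra t2 t3 Delta delta beta betainv star)
  (* bilinear forms M, K with M beta-invariant *)
  (M K : C2 -> F^o) (hM : linmap M) (hK : linmap K)
  (hMinv : beta_invariant t2 t3 beta M) :
  forall w : CbC,
    tildeF t2 star s2 (starprod t2 Delta beta t4 M K) w =
    conv t2 Delta s2 b2 m1 m2 (tildeF t2 star s2 M) (tildeF t2 star s2 K) w.
Proof. move=> w; exact: (@main_sec F C C2 t2 C3 t3 C4 t4 CbC s2 CbCb b2 Mx1 m1 Mx2 m2 hC2 hC3 hC4 hCbC hCbCb hMx1 hMx2 Delta delta beta betainv star hC M K hM hK hMinv w). Qed.
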